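(* Assume Hypothesis C, and fix a hypothesis $H\in\{\mathrm{RN},\mathrm{RA},\mathrm{RS}\}$ among those satisfied. Run the Optimizer; it assigns labels $1,\dots,n-1$ to some states. Extend this to a labeling $L$ of $N\cup\{0\}$ by giving the remaining states of $N$ the labels $n,\dots,|N|$ in an arbitrary way and $L(0)=|N|+1$. Then the priority rule $\pi$ keyed to $L$ is optimal: $V^{\pi}(s)=F(s)$ for every multi-state $s\in S$.
   Context: There are $K$ bandits with pairwise disjoint finite nonempty state sets $N_1,\dots,N_K$; $N=N_1\cup\dots\cup N_K$; $b(j)$ is the $k$ with $j\in N_k$. Bandit $k$ has real transition rates $q(i,j)$ ($i,j\in N_k$) forming $q^k$ and real rewards $r(i)$ forming $r^k$. A multi-state $s$ contains exactly one state $s_k$ of each $N_k$; $S$ is the set of multi-states; $s_{\setminus k}=s\setminus\{s_k\}$. A stationary nonrandomized policy is a map $\delta:S\to\{1,\dots,K\}$; $\Delta$ is the set of these. $Q^{\delta}(s,t)=q(s_{\delta(s)},j)$ if $t=s_{\setminus\delta(s)}\cup\{j\}$ with $j\in N_{\delta(s)}$, else $0$; $R^{\delta}(s)=r(s_{\delta(s)})$; $V^{\delta}=(I-Q^{\delta})^{-1}R^{\delta}$; $F(s)=\max_{\delta\in\Delta}V^{\delta}(s)$. A matrix is transient if its powers tend to $0$ entrywise. Hypothesis C: each $q^k$ is entrywise nonnegative and transient, and at least one of: (RN) each $q^k$ is substochastic; (RA) $r(i)\le0$ for all $i\in N$; (RS) $r(i)\ge0$ for all $i\in N$. A labeling is an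 injective $L:N\cup\{0\}\to\{1,\dots,|N|+1\}$ with $L(0)=|N|+1$; the priority rule keyed to $L$ is $\pi(s)=\arg\min_k L(s_k)$. Current data: each bandit $k$ carries a tableau $[(I-q),r]$ (initially $[(I-q^k),r^k]$) defining current values $q(j,p)$, $r(j)$; the amplification is $a(j)=\sum_{p\in N_{b(j)}}q(j,p)$. Categories and weak preference (depending on $H$): Under RN: category 1 if $a(j)=1,r(j)\ge0$; category 2 if $a(j)<1$; category 3 if $a(j)=1,r(j)<0$. Under RA: category 1 if $r(j)=0,a(j)\le1$; category 2 if $r(j)<0$; category 3 if $r(j)=0,a(j)>1$. Under RS: category 1 if $r(j)=0,a(j)\ge1$; category 2 if $r(j)>0$; category 3 if $r(j)=0,a(j)<1$. State $i$ is weakly preferable to state $j$ (possibly in different bandits, each evaluated with its current data) if $r(i)+a(i)r(j)>r(j)+a(j)r(i)$, or equality holds and the category of $i$ is $\le$ that of $j$. This relation is a total preorder. Revision step for state $i\in M_k$ (where $k=b(i)$): multiply row $i$ of bandit $k$'s tableau by $1/[1-q(i,i)]$; then for each $j\in M_k\setminus\{i\}$ replace row $j$ by itself plus $q(j,i)$ (current value) times the updated row $i$. Optimizer: (1) Set $M_k=N_k$ for each $k$; let $C$ consist of, for each bandit $k$, one state of $N_k$ weakly preferable to every other state of $N_k$ (original data); set $n=1$. (2) While $M_k\ne\emptyset$ for every $k$: choose $i\in C$ weakly preferable to all other states of $C$ (current data); set $k=b(i)$, $L(i)=n$, $n\leftarrow n+1$; (a) apply the revision step for $i$ on bandit $k$;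 (b) remove $i$ from $C$ and from $M_k$, and if $M_k\ne\emptyset$ insert into $C$ a state of $M_k$ weakly preferable to all other states of $M_k$ with respect to the updated data. The Optimizer stops as soon as some $M_k$ is empty. *)

(* Defs.v *)
From HB Require Import structures.
From mathcomp Require Import all_boot all_order all_algebra.
Set Implicit Arguments. Unset Strict Implicit. Unset Printing Implicit Defensive.
Import Order.TTheory GRing.Theory Num.Theory.
Local Open Scope ring_scope.

Inductive hyp := RN | RA | RS.

Definition mstate (K : nat) (T : finType) (b : T -> 'I_K) :=
  {s : {ffun 'I_K -> T} | [forall k, b (s k) == k]}.
HB.instance Definition _ K T b := Finite.on (@mstate K T b).

Section Bandits.
Variables (R : realFieldType) (K : nat) (T : finType) (b : T -> 'I_K).
(* T is N = N_1 u ... u N_K; b j is the bandit of j; N_k = [pred j | b j == k].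
   q : T -> T -> R, only its values q i j with b i = b j are used (q^k is the
   restriction of q to N_k x N_k);  r : T -> R the rewards. *)

Fixpoint powon (P : pred T) (A : T -> T -> R) (n : nat) : T -> T -> R :=
  match n with
  | 0 => fun i j => (i == j)%:R
  | n'.+1 => fun i j => \sum_(l | P l) powon P A n' i l * A l j
  end.

Definition transient_on (P : pred T) (A : T -> T -> R) : Prop :=
  forall i j, P i -> P j -> forall eps : R, 0 < eps ->
    exists N : nat, forall n : nat, (N <= n)%N -> `|powon P A n i j| < eps.

Definition bandit (k : 'I_K) : pred T := [pred j | b j == k].

Variables (q : T -> T -> R) (r : T -> R).

Definition hyp_holds (H : hyp) : Prop :=
  match H with
  | RN => forall i, \sum_(j | b j == b i) q i j <= 1
  | RA => forall i, r i <= 0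
  | RS => forall i, 0 <= r i
  end.

(* Hypothesis C: each q^k entrywise nonnegative and transient
   (the chosen H with hyp_holds H is a separate hypothesis of the theorem) *)
Definition hypC_base : Prop :=
  (forall i j, b i = b j -> 0 <= q i j) /\ (forall k, transient_on (bandit k) q).

Local Notation mstate := (@mstate K T b).
Definition policy := {ffun mstate -> 'I_K}.

(* Q^delta(s,t): t = s \ {s_k} u {j}, j in N_k, k = delta s *)
Definition Qfun (d : policy) (s t : mstate) : R :=
  let k := d s in
  if [forall k', (k' != k) ==> (val t k' == val s k')]
  then q (val s k) (val t k) else 0.

Definition Qmx (d : policy) : 'M[R]_#|{: mstate}| :=
  \matrix_(i, j) Qfun d (enum_val i : mstate) (enum_val j : mstate).

Definition Rvec (d : policy) : 'cV[R]_#|{: mstate}| :=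
  \col_i (let s : mstate := enum_val i in r (val s (d s))).

Definition Vmx (d : policy) : 'cV[R]_#|{: mstate}| :=
  invmx (1%:M - Qmx d) *m Rvec d.

Definition V (d : policy) (s : mstate) : R := Vmx d (enum_rank s) 0.

Definition F (s : mstate) : R :=
  match enum {: policy} with
  | [::] => 0
  | d :: ds => foldr Num.max (V d s) [seq V d' s | d' <- ds]
  end.

(* None stands for the state 0 *)
Definition labeling (L : option T -> nat) : Prop :=
  [/\ injective L, forall x, (1 <= L x <= #|T|.+1)%N & L None = #|T|.+1].

Definition priority_rule (L : option T -> nat) (d : policy) : Prop :=
  forall (s : mstate) (k : 'I_K), (L (Some (val s (d s))) <= L (Some (val s k)))%N.

End Bandits.

Section Optimizer.
Variables (R : realFieldType) (K : nat) (T : finType) (b : T -> 'I_K).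
Variables (q : T -> T -> R) (r : T -> R) (H : hyp).

(* the tableau: Atab j p is the (j,p) entry of (I - q), rtab j of r *)
Definition qcur (Atab : T -> T -> R) (j p : T) : R := (j == p)%:R - Atab j p.

Definition amp (Atab : T -> T -> R) (j : T) : R :=
  \sum_(p | b p == b j) qcur Atab j p.

Definition category (Atab : T -> T -> R) (rtab : T -> R) (j : T) : nat :=
  let a := amp Atab j in
  let rj := rtab j in
  match H with
  | RN => if a == 1 then (if 0 <= rj then 1%N else 3%N) else 2%N
  | RA => if rj == 0 then (if a <= 1 then 1%N else 3%N) else 2%N
  | RS => if rj == 0 then (if 1 <= a then 1%N else 3%N) else 2%N
  end.

Definition wpref (Atab : T -> T -> R) (rtab : T -> R) (i j : T) : bool :=
  let lhs := rtab i + amp Atab i * rtab j in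
  let rhs := rtab j + amp Atab j * rtab i in
  (rhs < lhs) ||
  ((lhs == rhs) && (category Atab rtab i <= category Atab rtab j)%N).

Definition A0 : T -> T -> R :=
  fun j p => if b j == b p then (j == p)%:R - q j p else 0.

(* revision step for state i, M the current set of unlabeled states *)
Definition reviseA (Atab : T -> T -> R) (M : {set T}) (i : T) : T -> T -> R :=
  fun j p =>
    if j == i then Atab i p * (1 - qcur Atab i i)^-1
    else if (j \in M) && (b j == b i)
    then Atab j p + qcur Atab j i * (Atab i p * (1 - qcur Atab i i)^-1)
    else Atab j p.

Definition reviser (Atab : T -> T -> R) (rtab : T -> R) (M : {set T}) (i : T)
  : T -> R :=
  fun j =>
    if j == i then rtab i * (1 - qcur Atab i i)^-1
    else if (j \in M) && (b j == b i)
    then rtab j + qcur Atab j i * (rtab i * (1 - qcur Atab i i)^-1)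
    else rtab j.

Definition init_C (C : {set T}) : Prop :=
  forall k : 'I_K, exists i, [/\ b i = k,
    [set j in C | b j == k] = [set i]
    & forall j, b j = k -> j != i -> wpref A0 r i j].

(* reachable configurations (tableau, rtab, M, C, labeled states in order);
   all nondeterministic tie-breaking choices are allowed *)
Inductive opt_reach : (T -> T -> R) -> (T -> R) -> {set T} -> {set T} -> seq T -> Prop :=
| opt_init C : init_C C -> opt_reach A0 r setT C [::]
| opt_step Atab rtab M C lab i C' :
    opt_reach Atab rtab M C lab ->
    (forall k : 'I_K, exists j, j \in M /\ b j = k) ->
    i \in C ->
    (forall j, j \in C -> j != i -> wpref Atab rtab i j) ->
    (let A' := reviseA Atab M i in
     let r' := reviser Atab rtab M i in
     let M' := M :\ i in
     ((~ exists j, j \in M' /\ b j = b i) /\ C' = C :\ i) \/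
     (exists i', [/\ i' \in M', b i' = b i,
        (forall j, j \in M' -> b j = b i -> j != i' -> wpref A' r' i' j)
        & C' = i' |: (C :\ i)])) ->
    opt_reach (reviseA Atab M i) (reviser Atab rtab M i) (M :\ i) C' (rcons lab i).

Definition opt_final (M : {set T}) : Prop :=
  exists k : 'I_K, forall j, b j = k -> j \notin M.

End Optimizer.

(* Main.v *)
Require Import Defs.
From HB Require Import structures.
From mathcomp Require Import all_boot all_order all_algebra.
From mathcomp Require Import ring lra.
Set Implicit Arguments. Unset Strict Implicit. Unset Printing Implicit Defensive.
Import Order.TTheory GRing.Theory Num.Theory.
Local Open Scope ring_scope.

Section Pref.
Variable R : realFieldType.

Definition cat (H : hyp) (a rj : R) : nat :=
  match H with
  | RN => if a == 1 then (if 0 <= rj then 1%N else 3%N) else 2%N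
  | RA => if rj == 0 then (if a <= 1 then 1%N else 3%N) else 2%N
  | RS => if rj == 0 then (if 1 <= a then 1%N else 3%N) else 2%N
  end.

Definition HC (H : hyp) (a r : R) : Prop :=
  match H with RN => a <= 1 | RA => r <= 0 | RS => 0 <= r end.

Definition Dl (ai ri aj rj : R) := ri + ai * rj - (rj + aj * ri).

Ltac norm := repeat match goal with
 | h : (_ == _) = true |- _ => move/eqP: h => h
 | h : (?x == ?y) = false |- _ => move/negbT: h => h
 | h : (?x <= ?y) = false |- _ => move/negbT: h; rewrite -ltNge => h
 | h : (?x <= ?y) = true |- _ => change (is_true (x <= y)) in h
 end.

Lemma ne_lt (x y : R) : x <= y -> x != y -> x < y.
Proof. by rewrite lt_neqAle => -> ->. Qed.
Lemma ne_lt' (x y : R) : y <= x -> x != y -> y < x.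
Proof. by rewrite lt_neqAle eq_sym => -> ->. Qed.

Lemma cat_cases H ai ri aj rj : HC H ai ri -> HC H aj rj ->
  ((cat H ai ri < cat H aj rj)%N -> 0 <= Dl ai ri aj rj) /\
  (cat H ai ri = cat H aj rj -> cat H ai ri != 2%N -> Dl ai ri aj rj = 0).
Proof.
rewrite /Dl; case: H => /= hi hj.
all: repeat (case: ifP => ?); norm; split => //= _; 
  repeat match goal with h : ?x != ?y |- _ => 
   first [ have := ne_lt h; clear h | have := ne_lt' h; clear h ] ; [ by auto | move=> ? ] end.
all: try (subst; nra).
Qed.

Definition wpl H (ai ri aj rj : R) : bool :=
  (rj + aj * ri < ri + ai * rj) ||
  ((ri + ai * rj == rj + aj * ri) && (cat H ai ri <= cat H aj rj)%N).

Lemma wpl_D H ai ri aj rj : wpl H ai ri aj rj -> 0 <= Dl ai ri aj rj.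
Proof.
rewrite /wpl /Dl => /orP[h|/andP[/eqP h _]]; first lra. lra.
Qed.

Lemma wpl_cat H ai ri aj rj : HC H ai ri -> HC H aj rj ->
  wpl H ai ri aj rj -> (cat H ai ri <= cat H aj rj)%N.
Proof.
move=> hi hj /orP[h|/andP[_ //]].
rewrite leqNgt; apply/negP => lt.
have := (cat_cases hj hi).1 lt; rewrite /Dl; lra.
Qed.

Lemma cat2_trans H ai ri at_ rt aj rj : HC H ai ri -> HC H at_ rt -> HC H aj rj ->
  cat H ai ri = 2%N -> cat H at_ rt = 2%N -> cat H aj rj = 2%N ->
  0 <= Dl ai ri at_ rt -> 0 <= Dl at_ rt aj rj -> 0 <= Dl ai ri aj rj.
Proof.
rewrite /Dl; case: H => /= hi ht hj.
all: repeat (case: ifP => ?); norm => // _ _ _ h1 h2.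
all: repeat match goal with h : ?x != ?y |- _ => 
   first [ have := ne_lt h; clear h | have := ne_lt' h; clear h ] ; [ by auto | move=> ? ] end.
- have e : (1 - at_) * (ri + ai * rj - (rj + aj * ri)) =
     (1 - aj) * (ri + ai * rt - (rt + at_ * ri)) + (1 - ai) * (rt + at_ * rj - (rj + aj * rt)) by ring.
  nra.
- have e : (- rt) * (ri + ai * rj - (rj + aj * ri)) =
     (- rj) * (ri + ai * rt - (rt + at_ * ri)) + (- ri) * (rt + at_ * rj - (rj + aj * rt)) by ring.
  nra.
- have e : (rt) * (ri + ai * rj - (rj + aj * ri)) =
     (rj) * (ri + ai * rt - (rt + at_ * ri)) + (ri) * (rt + at_ * rj - (rj + aj * rt)) by ring.
  nra.
Qed.

Lemma pref_trans H ai ri at_ rt aj rj : HC H ai ri -> HC H at_ rt -> HC H aj rj ->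
  wpl H ai ri at_ rt -> wpl H at_ rt aj rj -> 0 <= Dl ai ri aj rj.
Proof.
move=> hi ht hj w1 w2.
have c1 := wpl_cat hi ht w1; have c2 := wpl_cat ht hj w2.
have [lt|ge] := ltnP (cat H ai ri) (cat H aj rj).
  exact: (cat_cases hi hj).1 lt.
have eij : cat H ai ri = cat H aj rj by apply/eqP; rewrite eqn_leq ge (leq_trans c1 c2).
have eit : cat H ai ri = cat H at_ rt by apply/eqP; rewrite eqn_leq c1 eij c2.
have [e2|ne2] := eqVneq (cat H ai ri) 2%N.
  apply: (cat2_trans hi ht hj) => //; [by rewrite -eit|by rewrite -eij|exact: wpl_D w1|exact: wpl_D w2].
by rewrite ((cat_cases hi hj).2 eij ne2).
Qed.
End Pref.
Section MS.
Variables (R : realFieldType) (K : nat) (T : finType) (b : T -> 'I_K).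
Local Notation mst := (mstate (T:=T) b).

Definition upd (s : mst) (k : 'I_K) (j : T) : mst :=
  insubd s [ffun k' => if k' == k then j else val s k'].

Lemma mst_b (s : mst) k : b (val s k) = k.
Proof. by apply/eqP; exact: (forallP (valP s) k). Qed.

Lemma upd_val s k j : b j = k ->
  val (upd s k j) = [ffun k' => if k' == k then j else val s k'].
Proof.
move=> hb; rewrite val_insubd; case: ifP => // /negP []; apply/forallP => k'.
by rewrite ffunE; case: (k' =P k) => [->|_]; rewrite ?hb ?mst_b ?eqxx.
Qed.

Lemma upd_at s k j : b j = k -> val (upd s k j) k = j.
Proof. by move=> hb; rewrite upd_val // ffunE eqxx. Qed.

Lemma upd_other s k j k' : b j = k -> k' != k -> val (upd s k j) k' = val s k'.
Proof. by move=> hb nk; rewrite upd_val // ffunE (negPf nk). Qed.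

Lemma upd_bad s k j : b j != k -> upd s k j = s.
Proof.
move=> hb; apply: val_inj; rewrite val_insubd; case: ifP => // /forallP /(_ k).
by rewrite ffunE eqxx (negPf hb).
Qed.

Lemma mst_ext (s t : mst) : (forall k, val s k = val t k) -> s = t.
Proof. by move=> h; apply: val_inj; apply/ffunP. Qed.

Lemma upd_self s k : upd s k (val s k) = s.
Proof.
apply: mst_ext => k'; have [->|ne] := eqVneq k' k.
  by rewrite upd_at ?mst_b.
by rewrite upd_other ?mst_b.
Qed.

Lemma upd_upd s k j p : b p = k -> upd (upd s k j) k p = upd s k p.
Proof.
move=> hp; apply: mst_ext => k'; have [->|ne] := eqVneq k' k.
  by rewrite !upd_at.
have [hj|hj] := eqVneq (b j) k; last by rewrite (upd_bad _ hj).
by rewrite !upd_other.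
Qed.

Lemma upd_comm s k j k' p : k != k' -> b j = k -> b p = k' ->
  upd (upd s k j) k' p = upd (upd s k' p) k j.
Proof.
move=> nk hj hp; apply: mst_ext => k''.
have [->|n1] := eqVneq k'' k.
  by rewrite upd_other // upd_at // upd_at.
have [->|n2] := eqVneq k'' k'.
  by rewrite upd_at // upd_other // 1?eq_sym // upd_at.
by rewrite !upd_other.
Qed.

Variables (q : T -> T -> R) (r : T -> R).

Lemma sumQ (d : policy b) (s : mst) (f : mst -> R) :
  \sum_t Qfun q d s t * f t =
  \sum_(j | b j == d s) q (val s (d s)) j * f (upd s (d s) j).
Proof.
set k := d s.
under eq_bigr => t _ do rewrite /Qfun -/k (fun_if (fun x => x * f t)) mul0r.
rewrite -big_mkcond /=.
rewrite (reindex_onto (upd s k) (fun t : mst => val t k)); last first.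
  move=> t /forallP ht; apply: mst_ext => k'.
  have [->|ne] := eqVneq k' k; first by rewrite upd_at ?mst_b.
  by rewrite upd_other ?mst_b //; have := ht k'; rewrite ne => /eqP.
apply: eq_big => j.
  have [hj|hj] := eqVneq (b j) k.
    rewrite upd_at // eqxx andbT; apply/forallP => k'; apply/implyP => ne.
    by rewrite upd_other.
  rewrite (upd_bad _ hj); apply/negbTE; apply/nandP; right.
  by apply: contra hj => /eqP <-; rewrite mst_b.
by move=> /andP[_ /eqP ->].
Qed.


Definition W (w : T -> R) (s : mst) := \prod_(k < K) w (val s k).

Lemma W_s w s k : W w s = w (val s k) * \prod_(k' | k' != k) w (val s k').
Proof. by rewrite /W (bigD1 k). Qed.

Lemma W_upd w s k j : b j = k ->
  W w (upd s k j) = w j * \prod_(k' | k' != k) w (val s k').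
Proof.
move=> hj; rewrite (W_s _ _ k) upd_at //; congr (_ * _).
by apply: eq_bigr => k' nk; rewrite upd_other.
Qed.

Variable w : T -> R.
Hypothesis hq : forall i j, b i = b j -> 0 <= q i j.
Hypothesis hw : forall i, 0 < w i.
Hypothesis hqw : forall i, \sum_(j | b j == b i) q i j * w j < w i.

Lemma W_gt0 s : 0 < W w s.
Proof. by apply: prodr_gt0 => k _; exact: hw. Qed.

Lemma QW (d : policy b) s : \sum_t Qfun q d s t * W w t < W w s.
Proof.
rewrite sumQ; set k := d s.
under eq_bigr => j hj do rewrite W_upd ?(eqP hj) // mulrA.
rewrite -big_distrl /= (W_s _ s k) ltr_pM2r; last first.
  by apply: prodr_gt0 => k' _; exact: hw.
by have := hqw (val s k); rewrite mst_b.
Qed.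

Lemma Qfun_ge0 (d : policy b) s t : 0 <= Qfun q d s t.
Proof. by rewrite /Qfun; case: ifP => _ //; apply: hq; rewrite !mst_b. Qed.

Lemma monotone (d : policy b) (X : mst -> R) :
  (forall s, \sum_t Qfun q d s t * X t <= X s) -> forall s, 0 <= X s.
Proof.
move=> hX s.
case: (arg_minP (fun t => X t / W w t) (isT : predT s)) => s0 _ hmin.
set m := X s0 / W w s0 in hmin.
have hXt t : m * W w t <= X t.
  by rewrite -ler_pdivlMr ?W_gt0 //; exact: hmin.
have [m0|m0] := lerP 0 m.
  by have := hXt s; apply: le_trans; rewrite mulr_ge0 // ltW ?W_gt0.
exfalso.
have e : X s0 = m * W w s0 by rewrite /m divfK // gt_eqF ?W_gt0.
have h1 : m * (\sum_t Qfun q d s0 t * W w t) <= \sum_t Qfun q d s0 t * X t.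
  rewrite mulr_sumr; apply: ler_sum => t _.
  by rewrite mulrCA; apply: ler_wpM2l; [exact: Qfun_ge0 | exact: hXt].
have h2 : m * W w s0 < m * (\sum_t Qfun q d s0 t * W w t).
  by rewrite ltr_nM2l //; exact: QW.
have := hX s0; rewrite e; move: h1 h2; set S1 := \sum_t _; set S2 := \sum_t _. 
lra.
Qed.


Lemma row_eq (d : policy b) (s : mst) (Y : mst -> R) :
  \sum_(j < #|{: mst}|) (1%:M - Qmx q d) (enum_rank s) j * Y (enum_val j) =
  Y s - \sum_t Qfun q d s t * Y t.
Proof.
rewrite (reindex (@enum_rank mst)) /=; last first.
  by apply: onW_bij; exact: enum_rank_bij.
under eq_bigr => t _ do rewrite !mxE enum_rankK mulrBl.
rewrite sumrB; congr (_ - _); last first.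
  by apply: eq_bigr => t _; rewrite enum_rankK.
rewrite (bigD1 s) //= eqxx mul1r enum_rankK big1 ?addr0 // => t nt.
by rewrite (inj_eq enum_rank_inj) eq_sym (negPf nt) mul0r.
Qed.

Lemma unit_ok (d : policy b) : (1%:M - Qmx q d) \in unitmx.
Proof.
rewrite unitmxE unitfE -det_tr; apply/negP => /det0P [v vn0 hv].
set x : mst -> R := fun t => v 0 (enum_rank t).
have ex s : x s - \sum_t Qfun q d s t * x t = 0.
  rewrite -row_eq; move/matrixP: hv => /(_ 0 (enum_rank s)).
  rewrite !mxE => e; rewrite -[RHS]e; apply: eq_bigr => j _.
  by rewrite !mxE /x enum_valK mulrC.
have h1 := monotone (X := x) (d := d).
have h2 := monotone (X := fun t => - x t) (d := d).
have x0 s : x s = 0.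
  apply/eqP; rewrite eq_le; apply/andP; split.
    rewrite -oppr_ge0; apply: h2 => t; have := ex t.
    move=> e; under eq_bigr => u _ do rewrite mulrN.
    rewrite sumrN; lra.
  by apply: h1 => t; have := ex t; lra.
move/negP: vn0; apply; apply/eqP/matrixP => i j.
rewrite mxE (ord1 i) -(enum_valK j); exact: x0.
Qed.

Lemma V_eq (d : policy b) (s : mst) :
  V q r d s = r (val s (d s)) + \sum_t Qfun q d s t * V q r d t.
Proof.
have h : (1%:M - Qmx q d) *m Vmx q r d = Rvec r d.
  by rewrite /Vmx mulmxA mulmxV ?unit_ok // mul1mx.
move/matrixP: h => /(_ (enum_rank s) 0).
rewrite !mxE enum_rankK.
have -> : \sum_j (1%:M - Qmx q d) (enum_rank s) j * Vmx q r d j 0 =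
   \sum_(j < #|{: mst}|) (1%:M - Qmx q d) (enum_rank s) j * V q r d (enum_val j).
  by apply: eq_bigr => j _; rewrite /V enum_valK.
rewrite row_eq /= => e; lra.
Qed.

End MS.
Lemma ex_uniform (A : eqType) (X : seq A) (P : A -> nat -> Prop) :
  (forall a N N', P a N -> (N <= N')%N -> P a N') ->
  (forall a, a \in X -> exists N, P a N) -> exists N, forall a, a \in X -> P a N.
Proof.
move=> mono; elim: X => [|x X IH] h; first by exists 0%N.
have [N1 h1] := h x (mem_head _ _).
have [N2 h2] : exists N, forall a, a \in X -> P a N.
  by apply: IH => a ha; apply: h; rewrite in_cons ha orbT.
exists (maxn N1 N2) => a; rewrite in_cons => /orP[/eqP ->|ha].
  by apply: mono h1 _; rewrite leq_maxl.
by apply: mono (h2 _ ha) _; rewrite leq_maxr.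
Qed.

Section P1.
Variables (R : realFieldType) (K : nat) (T : finType) (b : T -> 'I_K) (q : T -> T -> R).

Lemma powon_ge0 (P : pred T) (A : T -> T -> R) n i j :
  (forall l j, P l -> P j -> 0 <= A l j) -> P j -> 0 <= powon P A n i j.
Proof.
move=> hA hj; elim: n j hj => [|n IH] j hj /=; first by rewrite ler0n.
by apply: sumr_ge0 => l hl; rewrite mulr_ge0 // ?IH // hA.
Qed.

Lemma powon_assoc (P : pred T) (A : T -> T -> R) n i l : P i -> P l ->
  \sum_(p | P p) A i p * powon P A n p l = powon P A n.+1 i l.
Proof.
elim: n l => [|n IH] l hi hl /=.
  rewrite (bigD1 l) //= eqxx mulr1 big1 ?addr0 => [|p /andP[_ /negPf]].
    by rewrite (bigD1 i) //= eqxx mul1r big1 ?addr0 // => p /andP[_ /negPf]; rewrite eq_sym => ->; rewrite mul0r.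
  by move=> ->; rewrite mulr0.
under eq_bigr => p hp do rewrite big_distrr /=.
rewrite exchange_big /=; apply: eq_bigr => m hm.
have := IH m hi hm; rewrite /= => <-; rewrite big_distrl /=; by apply: eq_bigr => p _; rewrite mulrA.
Qed.

Lemma exists_w : hypC_base b q ->
  exists w : T -> R, (forall i, 0 < w i) /\
    (forall i, \sum_(j | b j == b i) q i j * w j < w i).
Proof.
move=> [hq htr].
set eps : R := (#|T|%:R + 1)^-1.
have eps0 : 0 < eps by rewrite invr_gt0; apply: ltr_wpDl.
have [N hN] : exists N, forall a, a \in enum [set: T * T] ->
    (b a.1 = b a.2 -> forall n, (N <= n)%N ->
      `|powon (bandit b (b a.1)) q n a.1 a.2| < eps).
  apply: ex_uniform.
    by move=> a N N' h le e n hn; apply: h => //; apply: leq_trans hn.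
  move=> [i j] _ /=.
  case: (eqVneq (b i) (b j)) => e.
    have [N hN] := htr (b i) i j (eqxx _) (introT eqP (esym e)) eps eps0.
    by exists N.
  by exists 0%N => /eqP; rewrite (negPf e).
set S := fun (m : nat) (i : T) => \sum_(l | b l == b i) powon (bandit b (b i)) q m i l.
exists (fun i => \sum_(m < N.+1) S m i).
have Sge0 m i : 0 <= S m i.
  apply: sumr_ge0 => l hl; apply: powon_ge0 => //.
  by move=> l' j' /= /eqP h1 /eqP h2; apply: hq; rewrite h1 h2.
have S0 i : S 0%N i = 1.
  rewrite /S (bigD1 i) //= eqxx big1 ?addr0 // => l /andP[_].
  by rewrite eq_sym => /negPf ->.
split.
  move=> i; rewrite big_ord_recl S0; apply: ltr_wpDr => //.
  by apply: sumr_ge0 => m _; exact: Sge0.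
move=> i.
have e1 : \sum_(j | b j == b i) q i j * (\sum_(m < N.+1) S m j) =
          \sum_(m < N.+1) S m.+1 i.
  under eq_bigr => j /eqP hj do rewrite /S hj big_distrr /=.
  rewrite exchange_big /=; apply: eq_bigr => m _.
  under eq_bigr => j hj do rewrite big_distrr /=.
  rewrite exchange_big /=; apply: eq_bigr => l hl.
  by apply: powon_assoc.
rewrite e1.
have e2 : \sum_(m < N.+2) S m i = S 0%N i + \sum_(m < N.+1) S m.+1 i.
  exact: big_ord_recl.
have e3 : \sum_(m < N.+2) S m i = \sum_(m < N.+1) S m i + S N.+1 i.
  exact: big_ord_recr.
have bound : S N.+1 i < 1.
  apply: (@le_lt_trans _ _ (\sum_(l : T) eps)); last first.
    rewrite sumr_const -mulr_natl /eps.
    change (#|T|%:R / (#|T|%:R + 1) < 1 :> R).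
    rewrite ltr_pdivrMr; first lra.
    by apply: ltr_wpDl.
  rewrite [X in _ <= X](bigID (fun l => b l == b i)) /=.
  apply: ler_wpDr; first by apply: sumr_ge0 => l _; exact: ltW.
  apply: ler_sum => l /eqP hl; apply: ltW; apply: le_lt_trans (ler_norm _) _.
  have := hN (i, l); rewrite mem_enum inE /=.
  by move=> /(_ isT (esym hl) N.+1 (leqnSn N)).
have := S0 i; lra.
Qed.
End P1.

Section Opt.
Variables (R : realFieldType) (K : nat) (T : finType) (b : T -> 'I_K).
Variables (q : T -> T -> R) (r : T -> R) (H : hyp) (w : T -> R).
Hypothesis hw : forall i, 0 < w i.

Local Notation qc := (@qcur R T).

Record Inv (A : T -> T -> R) (rt : T -> R) (M C : {set T}) (lab : seq T) : Prop := {
  I1 : forall j p, j \in M -> p \in M -> b j = b p -> 0 <= qc A j p;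
  I2 : forall j p, j \in M -> p \notin M -> b p = b j -> qc A j p = 0;
  I3 : forall j, j \in M ->
         \sum_(p | (p \in M) && (b p == b j)) qc A j p * w p < w j;
  I4 : forall j, j \in M -> HC H (amp b A j) (rt j);
  I5 : forall k, (exists j, j \in M /\ b j = k) -> exists t, [/\ t \in C, b t = k &
         forall j, j \in M -> b j = k -> j != t -> wpref b H A rt t j];
  I6 : {subset C <= M};
  I7 : forall x, x \in lab -> x \notin M;
  I8 : uniq lab }.

Lemma wpref_wpl (A : T -> T -> R) (rt : T -> R) i j :
  wpref b H A rt i j = wpl H (amp b A i) (rt i) (amp b A j) (rt j).
Proof. by []. Qed.

Section Rev.
Variables (A : T -> T -> R) (rt : T -> R) (M : {set T}) (i : T).
Hypothesis iM : i \in M.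
Let d := (1 - qc A i i)^-1.
Hypothesis qii : qc A i i < 1.

Lemma d_gt0 : 0 < d.
Proof. by rewrite /d invr_gt0 subr_gt0. Qed.

Lemma dE : d * (1 - qc A i i) = 1.
Proof. by rewrite /d mulVf // subr_eq0 eq_sym lt_eqF. Qed.

Lemma qcii : qc A i i = 1 - A i i.
Proof. by rewrite /qcur eqxx. Qed.

Lemma Aii : A i i * d = 1.
Proof. have := dE; rewrite qcii mulrC => <-; congr (_ * _); ring. Qed.

Lemma rev_ii : qc (reviseA b A M i) i i = 0.
Proof. by rewrite /qcur /reviseA eqxx Aii subrr. Qed.

Lemma rev_ip p : p != i -> qc (reviseA b A M i) i p = qc A i p * d.
Proof.
by move=> np; rewrite /qcur /reviseA eqxx [i == p]eq_sym (negPf np) /= !sub0r mulNr.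
Qed.

Lemma rev_jp j p : j != i -> j \in M -> b j = b i ->
  qc (reviseA b A M i) j p = qc A j p - qc A j i * (A i p * d).
Proof.
move=> nj jM bj; rewrite [LHS]/qcur /reviseA (negPf nj) jM bj eqxx /= /d /qcur; ring.
Qed.

Lemma rev_jp' j p : j != i -> j \in M -> b j = b i -> p != i ->
  qc (reviseA b A M i) j p = qc A j p + qc A j i * qc (reviseA b A M i) i p.
Proof.
move=> nj jM bj np; rewrite rev_jp // rev_ip //.
have -> : A i p = - qc A i p by rewrite /qcur [i == p]eq_sym (negPf np) /= sub0r opprK.
ring.
Qed.

Lemma rev_ji j : j != i -> j \in M -> b j = b i -> qc (reviseA b A M i) j i = 0.
Proof.
move=> nj jM bj; rewrite rev_jp // Aii mulr1 subrr //.
Qed.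

Lemma rev_other j p : j != i -> ~~ ((j \in M) && (b j == b i)) ->
  qc (reviseA b A M i) j p = qc A j p.
Proof. by move=> nj h; rewrite /qcur /reviseA (negPf nj) (negPf h). Qed.

Lemma revr_i : reviser b A rt M i i = rt i * d.
Proof. by rewrite /reviser eqxx. Qed.

Lemma revr_j j : j != i -> j \in M -> b j = b i ->
  reviser b A rt M i j = rt j + qc A j i * reviser b A rt M i i.
Proof. by move=> nj jM bj; rewrite /reviser eqxx (negPf nj) jM bj eqxx. Qed.

Lemma revr_other j : j != i -> ~~ ((j \in M) && (b j == b i)) ->
  reviser b A rt M i j = rt j.
Proof. by move=> nj h; rewrite /reviser (negPf nj) (negPf h). Qed.

End Rev.

Lemma sum_split_i (M : {set T}) i (F : T -> R) : i \in M ->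
  \sum_(p | (p \in M) && (b p == b i)) F p =
  F i + \sum_(p | (p \in M :\ i) && (b p == b i)) F p.
Proof.
move=> iM; rewrite (bigD1 i) /=; last by rewrite iM eqxx.
congr (_ + _); apply: eq_bigl => p; rewrite in_setD1.
by case: (p \in M); case: (p == i); case: (b p == b i).
Qed.

Lemma sum_other_k (M : {set T}) i k (F : T -> R) : k != b i ->
  \sum_(p | (p \in M :\ i) && (b p == k)) F p =
  \sum_(p | (p \in M) && (b p == k)) F p.
Proof.
move=> nk; apply: eq_bigl => p; rewrite in_setD1.
have [->|//] := eqVneq p i; by rewrite /= [b i == k]eq_sym (negPf nk) andbF.
Qed.

Lemma amp_M A rt M C lab j : Inv A rt M C lab -> j \in M ->
  amp b A j = \sum_(p | (p \in M) && (b p == b j)) qc A j p.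
Proof.
move=> I jM; rewrite /amp (bigID (mem M)) /= [X in _ + X]big1 ?addr0.
  by apply: eq_bigl => p; rewrite andbC.
by move=> p /andP[/eqP bp pM]; apply: (I2 I).
Qed.

Lemma qii_lt1 A rt M C lab i : Inv A rt M C lab -> i \in M -> qc A i i < 1.
Proof.
move=> I iM; have := I3 I iM; rewrite sum_split_i //.
have : 0 <= \sum_(p | (p \in M :\ i) && (b p == b i)) qc A i p * w p.
  apply: sumr_ge0 => p /andP[]; rewrite in_setD1 => /andP[_ pM] /eqP bp.
  by apply: mulr_ge0; [exact: (I1 I iM pM (esym bp)) | exact: ltW (hw p)].
move=> h1 h2; have h3 : qc A i i * w i < 1 * w i by rewrite mul1r; lra.
by rewrite ltr_pM2r ?hw in h3.
Qed.

Lemma same_data (A : T -> T -> R) (rt : T -> R) (M : {set T}) i x : b x != b i ->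
  amp b (reviseA b A M i) x = amp b A x /\ reviser b A rt M i x = rt x.
Proof.
move=> bx; have nx : x != i by apply: contraNneq bx => ->.
have h : ~~ ((x \in M) && (b x == b i)) by rewrite (negPf bx) andbF.
split; last exact: revr_other.
by apply: eq_bigr => p _; rewrite rev_other.
Qed.


Lemma step_inv A rt M C lab i C' :
  Inv A rt M C lab ->
  (forall k, exists j, j \in M /\ b j = k) ->
  i \in C ->
  (forall j, j \in C -> j != i -> wpref b H A rt i j) ->
  (let A' := reviseA b A M i in let r' := reviser b A rt M i in let M' := M :\ i in
     ((~ exists j, j \in M' /\ b j = b i) /\ C' = C :\ i) \/
     (exists i', [/\ i' \in M', b i' = b i,
        (forall j, j \in M' -> b j = b i -> j != i' -> wpref b H A' r' i' j)
        & C' = i' |: (C :\ i)])) ->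
  Inv (reviseA b A M i) (reviser b A rt M i) (M :\ i) C' (rcons lab i).
Proof.
move=> I hne iC hpref hC'.
have iM : i \in M := I6 I iC.
have qii := qii_lt1 I iM.
have d0 := d_gt0 qii.
set d := (1 - qc A i i)^-1 in d0.
have hqip p : p != i -> qc (reviseA b A M i) i p = qc A i p * d by move=> np; rewrite rev_ip.
split.
- move=> j p; rewrite !in_setD1 => /andP[nj jM] /andP[np pM] bjp.
  have [bj|bj] := eqVneq (b j) (b i).
    rewrite rev_jp' // hqip //; apply: addr_ge0; first exact: (I1 I).
    apply: mulr_ge0; first exact: (I1 I).
    by apply: mulr_ge0 _ (ltW d0); apply: (I1 I iM pM); rewrite -bjp bj.
  by rewrite rev_other ?(I1 I) // (negPf bj) andbF.
- move=> j p; rewrite !in_setD1 => /andP[nj jM]; rewrite negb_and negbK => hp bpj.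
  have [bj|bj] := eqVneq (b j) (b i).
    have [->|np] := eqVneq p i; first exact: rev_ji.
    rewrite (negPf np) /= in hp; rewrite rev_jp' // hqip // (I2 I jM hp bpj).
    by rewrite (I2 I iM hp (etrans bpj bj)) mul0r mulr0 addr0.
  have np : p != i by apply: contraNneq bj => e; rewrite -bpj e.
  rewrite rev_other ?(negPf bj) ?andbF //; apply: (I2 I) => //.
  by move: hp; rewrite (negPf np).
- move=> j; rewrite in_setD1 => /andP[nj jM].
  have [bj|bj] := eqVneq (b j) (b i); last first.
    rewrite sum_other_k //.
    under eq_bigr => p _ do rewrite rev_other ?(negPf bj) ?andbF //.
    exact: (I3 I jM).
  have e1 : \sum_(p | (p \in M :\ i) && (b p == b j)) qc (reviseA b A M i) j p * w p
     = \sum_(p | (p \in M :\ i) && (b p == b i)) qc A j p * w p +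
       qc A j i * d * \sum_(p | (p \in M :\ i) && (b p == b i)) qc A i p * w p.
    rewrite bj big_distrr -big_split /=; apply: eq_bigr => p /andP[].
    rewrite in_setD1 => /andP[np _] _; rewrite rev_jp' // hqip //; ring.
  rewrite e1.
  have h1 := I3 I jM; rewrite bj sum_split_i // in h1.
  have h2 := I3 I iM; rewrite sum_split_i // in h2.
  set Sj := \sum_(p | _) qc A j p * w p in h1 *.
  set Si := \sum_(p | _) qc A i p * w p in h2 *.
  have dd : d * (1 - qc A i i) = 1 by exact: dE.
  have h3 : d * Si <= w i.
    have : Si <= (1 - qc A i i) * w i by lra.
    move/(ler_wpM2l (ltW d0)); rewrite mulrA dd mul1r //.
  have qji : 0 <= qc A j i by apply: (I1 I).
  have := ler_wpM2l qji h3; rewrite mulrA => h4.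
  lra.
- move=> j; rewrite in_setD1 => /andP[nj jM].
  have [bj|bj] := eqVneq (b j) (b i); last first.
    by have [-> ->] := same_data A rt M bj; exact: (I4 I).
  have h4 := I4 I jM; have h4i := I4 I iM.
  case: H h4 h4i => /= h4 h4i.
  + have e : amp b (reviseA b A M i) j =
        amp b A j - qc A j i * d * (1 - amp b A i).
      rewrite /amp bj.
      have -> : 1 - \sum_(p | b p == b i) qc A i p =
          \sum_(p | b p == b i) A i p.
        rewrite (bigD1 i) //= [X in _ = X](bigD1 i) //= /qcur eqxx.
        rewrite opprD addrA [X in _ = _ + X](eq_bigr (fun p => - ((i == p)%:R - A i p))).
          by rewrite sumrN /=; ring.
        by move=> p /andP[_ np]; rewrite eq_sym (negPf np) /=; ring.
      rewrite mulr_sumr -sumrB; apply: eq_bigr => p _; rewrite rev_jp // /d; ring.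
    rewrite e; have qji : 0 <= qc A j i by apply: (I1 I).
    have : 0 <= qc A j i * d * (1 - amp b A i).
      by apply: mulr_ge0; [apply: mulr_ge0 (ltW d0) | lra].
    lra.
  + rewrite revr_j // revr_i -/d; have qji : 0 <= qc A j i by apply: (I1 I).
    have : qc A j i * (rt i * d) <= 0.
      by apply: mulr_ge0_le0 => //; apply: mulr_le0_ge0 => //; exact: ltW.
    lra.
  + rewrite revr_j // revr_i -/d; have qji : 0 <= qc A j i by apply: (I1 I).
    have : 0 <= qc A j i * (rt i * d) by apply: mulr_ge0 => //; apply: mulr_ge0 (ltW d0).
    lra.
- move=> k [j [jM' bjk]].
  have [ek|nk] := eqVneq k (b i).
    case: hC' => [[hn _]|[i' [i'M bi' hi' ->]]].
      by exfalso; apply: hn; exists j; rewrite bjk ek.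
    exists i'; split => //; first by rewrite in_setU1 eqxx.
      by rewrite ek.
    by move=> j0 j0M bj0; apply: hi' => //; rewrite bj0.
  have jM : j \in M by move: jM'; rewrite in_setD1 => /andP[].
  have [t [tC btk ht]] := I5 I (ex_intro _ j (conj jM bjk)).
  have nt : t != i by apply: contraNneq nk => e; rewrite -btk e.
  have tC' : t \in C'.
    case: hC' => [[_ ->]|[i' [_ _ _ ->]]]; rewrite ?in_setU1 in_setD1 nt tC //.
    by rewrite orbT.
  exists t; split => // j0; rewrite in_setD1 => /andP[_ j0M] bj0 nj0.
  rewrite wpref_wpl.
  have bt : b t != b i by rewrite btk.
  have bj0' : b j0 != b i by rewrite bj0.
  have [-> ->] := same_data A rt M bt; have [-> ->] := same_data A rt M bj0'.
  by rewrite -wpref_wpl; apply: ht.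
- move=> x; case: hC' => [[_ ->]|[i' [i'M _ _ ->]]].
    by rewrite !in_setD1 => /andP[-> /(I6 I) ->].
  rewrite in_setU1 => /orP[/eqP -> //|]; rewrite !in_setD1 => /andP[-> /(I6 I) ->] //.
- move=> x; rewrite mem_rcons in_cons in_setD1 => /orP[/eqP ->|xl].
    by rewrite eqxx.
  by rewrite (negPf (I7 I xl)) andbF.
- rewrite rcons_uniq (I8 I) andbT; apply/negP => il.
  by have := I7 I il; rewrite iM.
Qed.


Lemma qcA0 j p : b j = b p -> qc (A0 b q) j p = q j p.
Proof. by move=> e; rewrite /qcur /A0 e eqxx; ring. Qed.

Hypothesis hq : forall i j, b i = b j -> 0 <= q i j.
Hypothesis hqw : forall i, \sum_(j | b j == b i) q i j * w j < w i.
Hypothesis hH : hyp_holds b q r H.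

Lemma init_inv C : init_C b q r H C -> Inv (A0 b q) r setT C [::].
Proof.
move=> hC; split.
- by move=> j p _ _ e; rewrite qcA0 // hq.
- by move=> j p _; rewrite in_setT.
- move=> j _; have := hqw j; apply: le_lt_trans; rewrite le_eqVlt; apply/orP; left.
  apply/eqP; apply: eq_big => [p|p /andP[_ /eqP e]]; first by rewrite in_setT.
  by rewrite qcA0.
- move=> j _; case: H hH => /= h; [|exact: h j|exact: h j].
  rewrite /amp; have := h j; apply: le_trans; rewrite le_eqVlt; apply/orP; left.
  by apply/eqP; apply: eq_bigr => p /eqP e; rewrite qcA0.
- move=> k _; have [t [btk hCk ht]] := hC k.
  exists t; split => //; last by move=> j _; exact: ht.
  have : t \in [set j in C | b j == k] by rewrite hCk in_set1.
  by rewrite inE => /andP[].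
- by move=> x _; rewrite in_setT.
- by move=> x; rewrite in_nil.
- by [].
Qed.

Lemma reach_inv A rt M C lab : opt_reach b q r H A rt M C lab -> Inv A rt M C lab.
Proof.
elim => [C0 hC|A1 rt1 M1 C1 lab1 i C' _ IH hne iC hpref hC'].
  exact: init_inv.
exact: (step_inv IH hne iC hpref hC').
Qed.

End Opt.

Section Back.
Variables (R : realFieldType) (K : nat) (T : finType) (b : T -> 'I_K).
Variables (H : hyp) (w : T -> R).
Hypothesis hw : forall i, 0 < w i.
Variable pi : policy b.
Local Notation mst := (mstate (T:=T) b).
Local Notation qc := (@qcur R T).

Definition Rhs (A : T -> T -> R) (rt : T -> R) (M : {set T}) (U : mst -> R)
  (s : mst) (k : 'I_K) : R :=
  rt (val s k) + \sum_(j | (j \in M) && (b j == k)) qc A (val s k) j * U (upd s k j).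

Definition inM (M : {set T}) (s : mst) := [forall k, val s k \in M].

Definition Good (A : T -> T -> R) (rt : T -> R) (M : {set T}) : Prop :=
  exists U : mst -> R, forall s, inM M s ->
    U s = Rhs A rt M U s (pi s) /\ forall k, Rhs A rt M U s k <= U s.

Lemma inM_upd M s k j : inM M s -> j \in M -> inM M (upd s k j).
Proof.
move=> /forallP hs jM; apply/forallP => k'.
have [hj|hj] := eqVneq (b j) k; last by rewrite upd_bad.
have [->|nk] := eqVneq k' k; first by rewrite upd_at.
by rewrite upd_other.
Qed.

Lemma inM_rem M i s j : inM M s -> val s (b i) = i -> b j = b i -> j \in M :\ i ->
  inM (M :\ i) (upd s (b i) j).
Proof.
move=> /forallP hs si bj jM'; apply/forallP => k'.
have [->|nk] := eqVneq k' (b i); first by rewrite upd_at.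
rewrite upd_other // in_setD1 hs andbT; apply: contra_neq nk => e.
by rewrite -[k'](mst_b s k') e.
Qed.

Lemma back_step A rt M C lab i :
  Inv b H w A rt M C lab ->
  (forall k, exists j, j \in M /\ b j = k) ->
  i \in C ->
  (forall j, j \in C -> j != i -> wpref b H A rt i j) ->
  (forall s, inM M s -> val s (b i) = i -> pi s = b i) ->
  Good (reviseA b A M i) (reviser b A rt M i) (M :\ i) -> Good A rt M.
Proof.
move=> I hne iC hpref hpi [U' hU'].
have iM : i \in M := I6 I iC.
have qii := qii_lt1 hw I iM.
have d0 := d_gt0 qii.
have dd := dE qii.
set d := (1 - qc A i i)^-1 in d0 dd.
set A' := reviseA b A M i; set r' := reviser b A rt M i; set M' := M :\ i.
set k1 := b i.
pose U (s : mst) := if val s k1 == i then Rhs A' r' M' U' s k1 else U' s.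
have UE (s : mst) : val s k1 != i -> U s = U' s by move=> h; rewrite /U (negPf h).
have UEi (s : mst) : val s k1 = i -> U s = Rhs A' r' M' U' s k1 by move=> h; rewrite /U h eqxx.
have k1E : k1 = b i by [].
exists U => s sM.
have sk k : val s k \in M by exact: (forallP sM k).
have [si|si] := eqVneq (val s k1) i.
-
  set X := \sum_(j | (j \in M') && (b j == k1)) qc A i j * U' (upd s k1 j).
  have Us : U s = (rt i + X) * d.
    rewrite UEi // /Rhs si /r' revr_i -/d mulrDl; congr (_ + _).
    rewrite /X mulr_suml; apply: eq_bigr => j /andP[]; rewrite in_setD1 => /andP[nj _] _.
    by rewrite /A' rev_ip // -/d mulrAC.
  have Rk1 : Rhs A rt M U s k1 = U s.
    rewrite /Rhs si k1E sum_split_i // -k1E.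
    have -> : upd s k1 i = s by rewrite -si upd_self.
    have -> : \sum_(p | (p \in M :\ i) && (b p == k1)) qc A i p * U (upd s k1 p) = X.
      apply: eq_bigr => j /andP[]; rewrite in_setD1 => /andP[nj _] /eqP bj.
      by rewrite UE // upd_at.
    rewrite Us; have : d - qc A i i * d = d * (1 - qc A i i) by rewrite mulrBr mulr1 mulrC.
    rewrite dd => e.
    transitivity ((rt i + X) * (d - qc A i i * d) + qc A i i * ((rt i + X) * d)).
      by rewrite e mulr1; ring.
    ring.
  have pis : pi s = k1 by apply: hpi.
  split; first by rewrite pis Rk1.
  move=> k; have [->|nk] := eqVneq k k1; first by rewrite Rk1.
  set x := val s k.
  have bx : b x = k by rewrite mst_b.
  have xM : x \in M := sk k.
  have bxi : b x != b i by rewrite bx.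
  set rho := r' i.
  have rhoE : rho = rt i * d by rewrite /rho /r' revr_i.
  set S1 := \sum_(p | (p \in M') && (b p == k1)) qc A' i p * U' (upd s k1 p).
  have sE : U s = rho + S1 by rewrite UEi // /Rhs si.
  set Y := fun p => \sum_(j | (j \in M) && (b j == k)) qc A x j * U' (upd (upd s k1 p) k j).
  set ak := \sum_(j | (j \in M) && (b j == k)) qc A x j.
  have Rk : Rhs A rt M U s k = rt x + rho * ak +
      \sum_(p | (p \in M') && (b p == k1)) qc A' i p * Y p.
    rewrite /Rhs -/x -addrA; congr (_ + _).
    rewrite /ak mulr_sumr.
    have -> : \sum_(p | (p \in M') && (b p == k1)) qc A' i p * Y p =
       \sum_(j | (j \in M) && (b j == k)) \sum_(p | (p \in M') && (b p == k1))
          qc A x j * (qc A' i p * U' (upd (upd s k1 p) k j)).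
      rewrite exchange_big /=; apply: eq_bigr => p _; rewrite /Y mulr_sumr.
      by apply: eq_bigr => j _; ring.
    rewrite -big_split /=; apply: eq_big => // j /andP[_ /eqP bj].
    have vj : val (upd s k j) k1 = i by rewrite upd_other // eq_sym.
    rewrite UEi // /Rhs vj -/rho mulrDr -mulr_sumr; congr (_ + _); first by ring.
    congr (_ * _); apply: eq_bigr => p /andP[_ /eqP bp]; rewrite upd_comm //.
  have Qge0 p : p \in M' -> b p == k1 -> 0 <= qc A' i p.
    rewrite in_setD1 => /andP[np pM] /eqP bp; rewrite /A' rev_ip // -/d.
    by apply: mulr_ge0 (ltW d0); apply: (I1 I).
  have hY p : p \in M' -> b p == k1 -> rt x + Y p <= U' (upd s k1 p).
    move=> pM' /eqP bp; have := (hU' (upd s k1 p) (inM_rem sM si bp pM')).2 k.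
    apply: le_trans; rewrite le_eqVlt; apply/orP; left; apply/eqP.
    rewrite /Rhs upd_other // -/x.
    rewrite /r'; have [_ ->] := same_data A rt M bxi.
    rewrite /M' sum_other_k; last by rewrite -bx.
    congr (_ + _); apply: eq_bigr => j _; rewrite /A' rev_other //.
      by apply: contraNneq bxi => ->.
    by rewrite bx (negPf nk) andbF.
  have h1 : \sum_(p | (p \in M') && (b p == k1)) qc A' i p * (rt x + Y p) <= S1.
    apply: ler_sum => p /andP[pM' bp]; apply: ler_wpM2l; first exact: Qge0.
    exact: hY.
  have e1 : \sum_(p | (p \in M') && (b p == k1)) qc A' i p * (rt x + Y p) =
     (\sum_(p | (p \in M') && (b p == k1)) qc A' i p) * rt x +
     \sum_(p | (p \in M') && (b p == k1)) qc A' i p * Y p.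
    by rewrite mulr_suml -big_split /=; apply: eq_bigr => p _; ring.
  set Sq := \sum_(p | (p \in M') && (b p == k1)) qc A' i p in e1.
  set SQ := \sum_(p | (p \in M :\ i) && (b p == b i)) qc A i p.
  have SqE : Sq = SQ * d.
    rewrite /Sq /SQ mulr_suml; apply: eq_bigr => p /andP[]; rewrite in_setD1.
    by move=> /andP[np _] _; rewrite /A' rev_ip.
  have ampi : amp b A i = qc A i i + SQ by rewrite (amp_M I iM) sum_split_i.
  have akE : ak = amp b A x by rewrite (amp_M I xM) bx.
  have [t [tC btk ht]] := I5 I (ex_intro _ x (conj xM bx)).
  have nti : t != i by apply: contraNneq nk => e; rewrite -btk e.
  have tM : t \in M := I6 I tC.
  have Dge0 : 0 <= Dl (amp b A i) (rt i) (amp b A x) (rt x).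
    have wit := hpref t tC nti; rewrite wpref_wpl in wit.
    have [e|nxt] := eqVneq x t; first by rewrite e; exact: wpl_D wit.
    have wtx := ht x xM bx nxt; rewrite wpref_wpl in wtx.
    exact: (pref_trans (I4 I iM) (I4 I tM) (I4 I xM) wit wtx).
  have key : rho + Sq * rt x - (rt x + rho * ak) =
      d * Dl (amp b A i) (rt i) (amp b A x) (rt x) +
      - rt x * (1 - d * (1 - qc A i i)).
    rewrite rhoE SqE akE ampi /Dl; ring.
  rewrite dd subrr mulr0 ?oppr0 addr0 in key.
  have : 0 <= d * Dl (amp b A i) (rt i) (amp b A x) (rt x) by apply: mulr_ge0 (ltW d0) Dge0.
  rewrite Rk sE; lra.
- have sM' : inM M' s.
    apply/forallP => k; rewrite in_setD1 sk andbT.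
    have [->|nk] := eqVneq k k1; first by [].
    by apply: contraNneq nk => e; rewrite -[k](mst_b s k) e.
  have RE k : Rhs A rt M U s k = Rhs A' r' M' U' s k.
    set x := val s k; have bx : b x = k by rewrite mst_b.
    have xM : x \in M := sk k.
    have [ek|nk] := eqVneq k k1; last first.
      have bxi : b x != b i by rewrite bx.
      rewrite /Rhs -/x /r'; have [_ ->] := same_data A rt M bxi.
      rewrite /M' sum_other_k -?bx //; congr (_ + _).
      apply: eq_bigr => j /andP[_ /eqP bj].
      rewrite /A' rev_other; last by rewrite bx (negPf nk) andbF.
        by rewrite UE // upd_other // eq_sym.
      by apply: contraNneq bxi => ->.
    have xi : x != i by rewrite /x ek.
    have bxk : b x = b i by rewrite bx ek.
    rewrite /Rhs -/x /r' revr_j // -/r' /M' ek.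
    rewrite k1E sum_split_i // -k1E.
    have -> : U (upd s k1 i) = r' i +
        \sum_(p | (p \in M :\ i) && (b p == k1)) qc A' i p * U' (upd s k1 p).
      rewrite UEi ?upd_at // /Rhs upd_at //; congr (_ + _).
      by apply: eq_bigr => p /andP[_ /eqP bp]; rewrite upd_upd.
    have -> : \sum_(p | (p \in M :\ i) && (b p == k1)) qc A x p * U (upd s k1 p) =
        \sum_(p | (p \in M :\ i) && (b p == k1)) qc A x p * U' (upd s k1 p).
      apply: eq_bigr => p /andP[]; rewrite in_setD1 => /andP[np _] /eqP bp.
      by rewrite UE // upd_at.
    have -> : \sum_(p | (p \in M :\ i) && (b p == k1)) qc A' x p * U' (upd s k1 p) =
        \sum_(p | (p \in M :\ i) && (b p == k1)) qc A x p * U' (upd s k1 p) +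
        qc A x i * \sum_(p | (p \in M :\ i) && (b p == k1)) qc A' i p * U' (upd s k1 p).
      rewrite mulr_sumr -big_split /=; apply: eq_bigr => p /andP[]; rewrite in_setD1.
      by move=> /andP[np _] _; rewrite /A' rev_jp' //; ring.
    ring.
  rewrite UE //; have [h1 h2] := hU' s sM'.
  by split; [rewrite RE | move=> k; rewrite RE].
Qed.
End Back.

Lemma label_lt (T : finType) (L : option T -> nat) (labF lab fut : seq T) (i j : T) :
  labeling L -> uniq labF ->
  (forall x, x \in labF -> L (Some x) = (index x labF).+1) ->
  lab ++ i :: fut = labF -> i \notin lab -> j \notin lab -> j != i ->
  (L (Some i) < L (Some j))%N.
Proof.
move=> [Linj Lb _] u hl e il jl ji.
have iF : i \in labF by rewrite -e mem_cat in_cons eqxx orbT.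
have Li : L (Some i) = (size lab).+1.
  by rewrite hl // -e index_cat (negPf il) /= eqxx addn0.
rewrite Li.
have [jF|jF] := boolP (j \in labF).
  rewrite hl // -e index_cat (negPf jl) /= eq_sym (negPf ji) addnS.
  by rewrite !ltnS leq_addr.
rewrite ltnNge; apply/negP => le.
have sz : (size lab < size labF)%N by rewrite -e size_cat /= addnS ltnS leq_addr.
have /andP[L1 _] := Lb (Some j).
set m := (L (Some j)).-1.
have mlt : (m < size labF)%N.
  by rewrite /m; apply: leq_ltn_trans sz; rewrite -ltnS prednK.
have yF : nth i labF m \in labF by exact: mem_nth.
have := hl _ yF; rewrite index_uniq // /m prednK // => e2.
have := Linj _ _ e2 => [[ey]].
by move: jF; rewrite -ey yF.
Qed.

Section Final.
Variables (R : realFieldType) (K : nat) (T : finType) (b : T -> 'I_K).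
Variables (q : T -> T -> R) (r : T -> R) (H : hyp) (w : T -> R).
Hypothesis hw : forall i, 0 < w i.
Hypothesis hq : forall i j, b i = b j -> 0 <= q i j.
Hypothesis hqw : forall i, \sum_(j | b j == b i) q i j * w j < w i.
Hypothesis hH : hyp_holds b q r H.
Variables (pi : policy b) (L : option T -> nat) (labF : seq T).
Hypothesis hL : labeling L.
Hypothesis hu : uniq labF.
Hypothesis hlab : forall x, x \in labF -> L (Some x) = (index x labF).+1.
Hypothesis hpi : priority_rule L pi.

Lemma reach_good A rt M C lab : opt_reach b q r H A rt M C lab ->
  forall fut, lab ++ fut = labF -> Good pi A rt M -> Good pi (A0 b q) r setT.
Proof.
elim => [C0 _|A1 rt1 M1 C1 lab1 i C' hr IH hne iC hpref hC'] fut e G //.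
have I := reach_inv hw hq hqw hH hr.
apply: (IH (i :: fut)); first by rewrite -cat_rcons.
apply: (back_step hw I hne iC hpref) => //.
move=> s sM si; case: (eqVneq (pi s) (b i)) => [//|ne]; exfalso.
have := hpi s (b i); rewrite si leqNgt => /negP; apply.
have jM : val s (pi s) \in M1 by exact: (forallP sM (pi s)).
have iM : i \in M1 := I6 I iC.
apply: (label_lt hL hu hlab (lab := lab1) (fut := fut)).
- by rewrite -cat_rcons.
- by apply/negP => /(I7 I); rewrite iM.
- by apply/negP => /(I7 I); rewrite jM.
- by apply: contra ne => /eqP <-; rewrite mst_b.
Qed.

End Final.

Lemma foldr_max_ge (R : realFieldType) (x : R) l :
  forall y, y \in x :: l -> y <= foldr Num.max x l.
Proof.
elim: l => [|z l IH] y; first by rewrite inE => /eqP ->.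
rewrite /= !inE => /or3P[/eqP ->|/eqP ->|yl].
- by rewrite le_max (IH x) ?mem_head ?orbT.
- by rewrite le_max lexx.
- by rewrite le_max (IH y) ?orbT // in_cons yl orbT.
Qed.

Lemma foldr_max_mem (R : realFieldType) (x : R) l : foldr Num.max x l \in x :: l.
Proof.
elim: l => [|z l IH] /=; first by rewrite mem_head.
rewrite maxEle; case: ifP => _; last by rewrite !in_cons eqxx orbT.
by move: IH; rewrite !in_cons => /orP[->//|->]; rewrite !orbT.
Qed.

Unset Implicit Arguments.

Theorem proposition6p1 (R : realFieldType) (K : nat) (T : finType)
  (b : T -> 'I_K) (q : T -> T -> R) (r : T -> R) (H : hyp) :
  (forall k : 'I_K, exists j, b j = k) ->
  hypC_base b q ->
  hyp_holds b q r H ->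
  forall (Atab : T -> T -> R) (rtab : T -> R) (M C : {set T}) (lab : seq T),
  opt_reach b q r H Atab rtab M C lab ->
  opt_final b M ->
  forall L : option T -> nat,
  labeling L ->
  (forall j, j \in lab -> L (Some j) = (index j lab).+1) ->
  forall pi : policy b,
  priority_rule L pi ->
  forall s : mstate b, V q r pi s = F q r s.
Proof.
move=> hne hC hH A rt M C lab hreach hfin L hL hlab pi hpi s.
have [hq htr] := hC.
have [w [hw hqw]] := exists_w hC.
have I := reach_inv hw hq hqw hH hreach.
have G : Good pi (A0 b q) r setT.
  apply: (reach_good hw hq hqw hH hL (I8 I) hlab hpi hreach (fut := [::])).
    by rewrite cats0.
  exists (fun _ => 0) => s' sM; exfalso; have [k hk] := hfin.
  by have := hk _ (mst_b s' k); rewrite (forallP sM k).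
have [U hU] := G.
have hR t k : Rhs (A0 b q) r setT U t k =
    r (val t k) + \sum_(j | b j == k) q (val t k) j * U (upd t k j).
  rewrite /Rhs; congr (_ + _); apply: eq_big => [j|j /andP[_ /eqP bj]].
    by rewrite in_setT.
  by rewrite qcA0 // mst_b.
have inT (t : mstate b) : inM [set: T] t by apply/forallP => k; rewrite in_setT.
have Ueq (t : mstate b) : U t = r (val t (pi t)) + \sum_u Qfun q pi t u * U u.
  by rewrite sumQ -hR; exact: (hU t (inT t)).1.
have Ule (d : policy b) (t : mstate b) : r (val t (d t)) + \sum_u Qfun q d t u * U u <= U t.
  by rewrite sumQ -hR; exact: (hU t (inT t)).2.
have Vle (d : policy b) (t : mstate b) : V q r d t <= U t.
  rewrite -subr_ge0.
  apply: (monotone hq hw hqw (d := d) (X := fun t => U t - V q r d t)) => t'.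
  under eq_bigr => u _ do rewrite mulrBr.
  rewrite sumrB; have h1 := Ule d t'; have h2 := V_eq r hq hw hqw d t'; lra.
have Vpi (t : mstate b) : V q r pi t = U t.
  apply/eqP; rewrite eq_le Vle /= -subr_ge0.
  apply: (monotone hq hw hqw (d := pi) (X := fun t => V q r pi t - U t)) => t'.
  under eq_bigr => u _ do rewrite mulrBr.
  rewrite sumrB; have h1 := Ueq t'; have h2 := V_eq r hq hw hqw pi t'; lra.
rewrite /F; case E: (enum {: policy b}) => [|d ds].
  have : pi \in enum {: policy b} by rewrite mem_enum.
  by rewrite E.
apply/eqP; rewrite eq_le; apply/andP; split.
  apply: foldr_max_ge.
  have : pi \in d :: ds by rewrite -E mem_enum.
  by move=> h; apply: (map_f (fun d' => V q r d' s) h).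
have := foldr_max_mem (V q r d s) [seq V q r d' s | d' <- ds].
move=> /(map_f id) ; rewrite map_id.
have -> : V q r d s :: [seq V q r d' s | d' <- ds] = [seq V q r d' s | d' <- d :: ds] by [].
move=> /mapP [d' _ ->].
rewrite Vpi; exact: Vle.
Qed.
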